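(* Let $G$ be a compact group and $z:G\to\mathbb C\setminus\{0\}$ a continuous central function. Then the Ewens measure $\mu^{\mathrm{Ewens}}_{S_n(G)}$ is a probability measure on $S_n(G)$, i.e. $$\int_{S_n(G)} n!\,\frac{\prod_{c\in[G]}z(c)^{[x](c)}\overline{z(c)}^{[x](c)}}{I(I+1)\cdots(I+n-1)}\,d\mu_{S_n(G)}(x)=1,\qquad I=\int_G|z(g)|^2d\mu_G(g).$$
   Context: $G$ compact with normalized Haar measure $\mu_G$; $[G]$ its conjugacy classes; central functions are regarded as functions on $[G]$. $S_n(G)=G^n\rtimes S_n$ with elements $((g_1,\dots,g_n),s)$ and product $((g_i),s)((h_i),t)=((g_ih_{s^{-1}(i)}),st)$. For $x=((g_1,\dots,g_n),s)$, the color of a cycle $(i_1\cdots i_r)$ of $s$ is the conjugacy class of $g_{i_r}\cdots g_{i_1}$, and $[x](c)$ is the number of cycles of $s$ of color $c$. $\mu_{S_n(G)}$ is the product of Haar measure on $G^n$ and the uniform probability measure on $S_n$. The Ewens measure $\mu^{\mathrm{Ewens}}_{S_n(G)}$ is the measure with the displayed density with respect to $\mu_{S_n(G)}$. *)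

(* Defs.v *)
From HB Require Import structures.
From mathcomp Require Import all_boot all_order all_algebra all_fingroup.
From mathcomp Require Import all_classical all_reals all_analysis.
From mathcomp Require Import complex.
Set Implicit Arguments. Unset Strict Implicit. Unset Printing Implicit Defensive.
Import Order.TTheory GRing.Theory Num.Theory numFieldNormedType.Exports.
Local Open Scope ring_scope.

Definition Borel (G : ptopologicalType) := g_sigma_algebraType (@open G).

Section Wreath.
Variables (G : ptopologicalType) (mul : G -> G -> G) (e : G).

(* color representative of the cycle C of s, starting at i_1 = some element
   of C (the smallest): g_{i_r} * ... * g_{i_2} * g_{i_1}, with i_{k+1} = s i_k. *)
Definition cycle_color (n : nat) (g : 'I_n -> G) (s : 'S_n) (C : {set 'I_n})
    : G :=
  match [pick i in C] with
  | Some i => foldl (fun acc k => mul (g ((s ^+ k)%g i)) acc) e (iota 0 #|C|)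
  | None => e
  end.

End Wreath.

Fixpoint iint (R : realType) (G : ptopologicalType)
    (mu : {measure set (Borel G) -> \bar R}) (n : nat)
    (F : seq G -> \bar R) : \bar R :=
  match n with
  | 0 => F [::]
  | k.+1 => (\int[mu]_y iint mu k (fun s => F (y :: s)))%E
  end.

(* Integral over S_n(G) w.r.t. mu_{S_n(G)} = (Haar)^{n} x uniform on S_n. *)
Definition int_SnG (R : realType) (G : ptopologicalType)
    (mu : {measure set (Borel G) -> \bar R}) (n : nat)
    (f : ('I_n -> G) -> 'S_n -> \bar R) : \bar R :=
  ((n`!%:R)^-1%:E *
   \sum_(s : 'S_n) iint mu n (fun gs => f (fun i => nth point gs i) s))%E.

(* The (complex-valued) Ewens density
   n! prod_c z(c)^[x](c) conj(z(c))^[x](c) / (I (I+1) ... (I+n-1)),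
   written as a product over the cycles of s (each cycle contributes
   z(color) * conj(z(color))). *)
Definition ewens_density (R : realType) (G : ptopologicalType)
    (mul : G -> G -> G) (e : G) (z : G -> R[i]) (I : R) (n : nat)
    (g : 'I_n -> G) (s : 'S_n) : R[i] :=
  (n`!%:R * \prod_(C in porbits s)
       (z (cycle_color mul e g s C) * (z (cycle_color mul e g s C))^*))
  / ((\prod_(k < n) (I + k%:R))%:C)%C.

(* Main.v *)
Require Import Defs.
From HB Require Import structures.
From mathcomp Require Import all_boot all_order all_algebra all_fingroup.
From mathcomp Require Import all_classical all_reals all_analysis.
From mathcomp Require Import complex.
From mathcomp Require Import measurable_realfun.
From mathcomp Require Import ring zify.
Import Order.TTheory GRing.Theory Num.Theory numFieldNormedType.Exports.
Local Open Scope classical_set_scope.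
Local Open Scope ring_scope.

Lemma cont_meas (R : realType) (G : ptopologicalType) (f : G -> R) :
  continuous f -> measurable_fun (setT : set (Borel G)) (f : Borel G -> R).
Proof.
move=> cf.
have oG : forall a : R, open [set x : G | a < f x].
  move=> a; have := (continuousP f).1 cf [set y | a < y] (@open_gt _ a).
  by [].
apply: (@measurability _ _ (Borel G) R setT f (@ocitv R)) => //.
move=> _ [_ [[a b] _ <-] <-].
rewrite setTI.
have -> : f @^-1` `]a, b]%classic = [set x : G | a < f x] `&` ~` [set x : G | b < f x].
  apply/seteqP; split => x /=; rewrite in_itv /=.
    by move=> /andP[-> ]; rewrite leNgt => /negP.
  by move=> [-> ]; rewrite leNgt => /negP.
apply: measurableI; first exact: sub_sigma_algebra.
by apply: measurableC; exact: sub_sigma_algebra.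
Qed.

Lemma cont_measG (G : ptopologicalType) (f : G -> G) :
  continuous f -> measurable_fun (setT : set (Borel G)) (f : Borel G -> Borel G).
Proof.
move=> cf; apply: (@measurability _ _ (Borel G) (Borel G) setT f (@open G)) => //.
move=> _ [B oB <-]; rewrite setTI; apply: sub_sigma_algebra.
exact: (continuousP f).1 cf B oB.
Qed.

Lemma cont_mul_l (G : ptopologicalType) (mul : G -> G -> G)
  (mul_cont : continuous (fun p : G * G => mul p.1 p.2)) (a : G) :
  continuous (mul a).
Proof.
move=> x.
apply: (@continuous_comp _ _ _ (fun y : G => (a, y)) (fun p : G * G => mul p.1 p.2)).
  by apply: cvg_pair; [exact: cvg_cst | exact: cvg_id].
exact: mul_cont.
Qed.

Lemma cont_mul_r (G : ptopologicalType) (mul : G -> G -> G)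
  (mul_cont : continuous (fun p : G * G => mul p.1 p.2)) (a : G) :
  continuous (mul^~ a).
Proof.
move=> x.
apply: (@continuous_comp _ _ _ (fun y : G => (y, a)) (fun p : G * G => mul p.1 p.2)).
  by apply: cvg_pair; [exact: cvg_id | exact: cvg_cst].
exact: mul_cont.
Qed.

Lemma pushinv (R : realType) (G : ptopologicalType) (mu : {measure set (Borel G) -> \bar R})
  (phi : G -> G) (cphi : continuous phi)
  (inv : forall A : set (Borel G), measurable A -> mu ((phi : Borel G -> Borel G) @^-1` A) = mu A)
  (h : G -> R) : continuous h -> (forall x, 0 <= h x) ->
  (\int[mu]_x (h (phi x))%:E = \int[mu]_x (h x)%:E)%E.
Proof.
move=> ch h0.
have mphi := @cont_measG G phi cphi.
rewrite [RHS](eq_measure_integral (pushforward mu (phi : Borel G -> Borel G))); last first.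
  by move=> A mA _; exact: (esym (inv A mA)).
rewrite [RHS](@ge0_integral_pushforward _ _ _ _ R (phi : Borel G -> Borel G) mphi mu setT (fun x => (h x)%:E)) //.
- by apply/measurable_EFinP; exact: cont_meas.
- by move=> y _; rewrite lee_fin.
Qed.

Lemma cont_ub (R : realType) (G : ptopologicalType) (f : G -> R) :
  continuous f -> compact [set: G] -> exists M : R, forall x, f x <= M.
Proof.
move=> cf cG.
have cK : compact (f @` [set: G]) := continuous_compact (continuous_subspaceT cf) cG.
have := @compact_bounded R R^o _ cK.
move=> [M [_ HM]].
exists (`|M| + 1) => x.
have := HM (`|M| + 1) _ (f x) (ex_intro2 _ _ x I erefl).
move=> /(_ _)/= H.
have : `|f x| <= `|M| + 1 by apply: H; rewrite (le_lt_trans (ler_norm M)) // ltrDl.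
by move=> /(le_trans (ler_norm _)).
Qed.

Section IInt.
Set Implicit Arguments.
Variables (R : realType) (G : ptopologicalType) (mu : {measure set (Borel G) -> \bar R}).
Local Open Scope ereal_scope.

Lemma iint_ext n (F F' : seq G -> \bar R) :
  (forall s, size s = n -> F s = F' s) -> iint mu n F = iint mu n F'.
Proof.
elim: n F F' => [|n IH] F F' H /=; first exact: H.
congr (integral _ _); apply: funext => y.
by apply: IH => s hs; apply: H; rewrite /= hs.
Qed.

Lemma iint_rcons n (F : seq G -> \bar R) :
  iint mu n.+1 F = iint mu n (fun s => \int[mu]_y F (rcons s y)).
Proof.
elim: n F => [|n IH] F //=.
congr (integral _ _); apply: funext => y.
exact: (IH (fun s => F (y :: s))).
Qed.
End IInt.

Section Claim.
Set Implicit Arguments.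
Variables (R : realType) (G : ptopologicalType) (mul : G -> G -> G) (e : G).
Hypotheses (mulA : forall x y w, mul x (mul y w) = mul (mul x y) w)
  (mul1g : forall x, mul e x = x)
  (mul_cont : continuous (fun p : G * G => mul p.1 p.2)).
Variable (mu : probability (Borel G) R).
Variables (f : G -> R) (I : R).
Hypotheses (fcont : continuous f) (f0 : forall x, 0 <= f x) (I0 : 0 <= I)
  (hinv : forall a b, (\int[mu]_x (f (mul a (mul x b)))%:E = I%:E)%E).

Definition evalw (w : seq nat) (gs : seq G) : G :=
  foldl (fun acc k => mul (nth point gs k) acc) e w.

Lemma foldl_mul (v : nat -> G) w acc :
  foldl (fun a k => mul (v k) a) acc w = mul (foldl (fun a k => mul (v k) a) e w) acc.
Proof.
elim: w acc => [|k w IH] acc /=; first exact: (esym (mul1g acc)).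
rewrite IH [in RHS]IH. rewrite -mulA. congr (mul _ _). rewrite -mulA. congr (mul _ _). exact: (esym (mul1g acc)).
Qed.

Lemma evalw_rcons w s y : all (fun k => k < size s)%N w -> evalw w (rcons s y) = evalw w s.
Proof.
rewrite /evalw; elim: w e => [|k w IH] acc //= /andP[ks hw].
by rewrite nth_rcons ks IH.
Qed.

Lemma uniq_mid (T : eqType) (A B C : seq T) x :
  uniq (A ++ B ++ C) -> x \in B -> x \notin A ++ C.
Proof.
rewrite (perm_uniq (permEl (perm_catCA A B C))) cat_uniq => /and3P[_ H _] xB.
apply/negP => xAC; move/negP: H; apply; apply/hasP; exists x => //.
Qed.

Arguments uniq_mid {T A B C x}.

Lemma uniq_sides (T : eqType) (A B C : seq T) :
  uniq (A ++ B ++ C) -> uniq (A ++ C).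
Proof.
by rewrite (perm_uniq (permEl (perm_catCA A B C))) cat_uniq => /and3P[].
Qed.

Arguments uniq_sides {T A B C}.

Lemma cont_AyB a b : continuous (fun y => f (mul a (mul y b))).
Proof.
move=> x.
apply: (@continuous_comp _ _ _ (fun y => mul a (mul y b)) f); last exact: fcont.
apply: (@continuous_comp _ _ _ (fun y => mul y b) (mul a)).
  exact: cont_mul_r.
exact: cont_mul_l.
Qed.

Local Open Scope ereal_scope.

Lemma claim n : forall (ws : seq (seq nat)) (c : R), (0 <= c)%R ->
  all (fun w => w != [::]) ws -> uniq (flatten ws) ->
  all (fun k => k < n)%N (flatten ws) ->
  iint mu n (fun gs => (c * \prod_(w <- ws) f (evalw w gs))%R%:E) = (c * I ^+ size ws)%R%:E.
Proof.
elim: n => [|n IH] ws c c0 ne u lt.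
  case: ws ne u lt => [|w ws] /=; first by rewrite big_nil.
  by case: w => [|k w].
rewrite iint_rcons.
have [hw|nhw] := boolP (has (fun w => n \in w) ws).
  move: hw => /hasP [w0 w0in nw0].
  case/splitPr: w0in ne u lt => ws1 ws2 ne u lt.
  case/splitPr: nw0 ne u lt => pre post ne u lt.
  rewrite flatten_cat /= in u lt.
  set A := flatten ws1 in u lt; set C := flatten ws2 in u lt.
  have nB : n \in pre ++ n :: post by rewrite mem_cat inE eqxx orbT.
  have nAC : n \notin A ++ C := uniq_mid u nB.
  have uB : uniq (pre ++ n :: post).
    by move: u; rewrite !cat_uniq => /and3P[_ _ /andP[]].
  have nP : n \notin pre ++ post.
    by apply: (@uniq_mid _ pre [:: n] post) => //; rewrite inE.
  have ltAC : all (fun k => k < n)%N (A ++ C).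
    apply/allP => k kAC; move/allP: lt => /(_ k); rewrite !mem_cat.
    move: kAC; rewrite mem_cat => /orP[kA|kC].
      rewrite kA /= => /(_ isT); rewrite ltnS leq_eqVlt => /orP[/eqP ekn|//].
      by move: nAC; rewrite -ekn mem_cat kA.
    rewrite kC !orbT => /(_ isT); rewrite ltnS leq_eqVlt => /orP[/eqP ekn|//].
    by move: nAC; rewrite -ekn mem_cat kC orbT.
  have ltP : all (fun k => k < n)%N (pre ++ post).
    apply/allP => k kP; move/allP: lt => /(_ k); rewrite !mem_cat.
    move: kP; rewrite mem_cat => /orP[kA|kC].
      rewrite kA /= orbT => /(_ isT); rewrite ltnS leq_eqVlt => /orP[/eqP ekn|//].
      by move: nP; rewrite -ekn mem_cat kA.
    rewrite inE kC !orbT => /(_ isT); rewrite ltnS leq_eqVlt => /orP[/eqP ekn|//].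
    by move: nP; rewrite -ekn mem_cat kC orbT.
  have key : forall s : seq G, size s = n ->
    \int[mu]_y (c * \prod_(w <- ws1 ++ (pre ++ n :: post) :: ws2) f (evalw w (rcons s y)))%R%:E
    = ((c * I) * \prod_(w <- ws1 ++ ws2) f (evalw w s))%R%:E.
    move=> s hs.
    have hw : forall w, w \in ws1 ++ ws2 -> all (fun k => k < size s)%N w.
      move=> w win; apply/allP => k kw; rewrite hs; move/allP: ltAC; apply.
      by rewrite /A /C -flatten_cat; apply/flattenP; exists w.
    transitivity (\int[mu]_y ((c * \prod_(w <- ws1 ++ ws2) f (evalw w s))%R%:E *
        (f (mul (evalw post s) (mul y (evalw pre s))))%:E)).
      apply: eq_integral => y _; rewrite -EFinM; congr EFin.
      rewrite big_cat big_cons /= big_cat /=.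
      rewrite (@eq_big_seq _ _ _ _ ws1 (fun w => f (evalw w (rcons s y))) (fun w => f (evalw w s))); last first.
        by move=> w win; rewrite evalw_rcons // hw // mem_cat win.
      rewrite (@eq_big_seq _ _ _ _ ws2 (fun w => f (evalw w (rcons s y))) (fun w => f (evalw w s))); last first.
        by move=> w win; rewrite evalw_rcons // hw // mem_cat win orbT.
      have -> : evalw (pre ++ n :: post) (rcons s y) = mul (evalw post s) (mul y (evalw pre s)).
        have hpre : all (fun k => k < size s)%N pre.
          by apply/allP => k kp; rewrite hs; move/allP: ltP; apply; rewrite mem_cat kp.
        have hpost : all (fun k => k < size s)%N post.
          by apply/allP => k kp; rewrite hs; move/allP: ltP; apply; rewrite mem_cat kp orbT.
        have E1 := @evalw_rcons pre s y hpre; have E2 := @evalw_rcons post s y hpost.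
        rewrite -E1 -E2 /evalw foldl_cat /= foldl_mul nth_rcons hs ltnn eqxx.
        by [].
      ring.
    rewrite ge0_integralZl //.
    - by rewrite hinv -EFinM; congr EFin; ring.
    - apply/measurable_EFinP. have HH := (@cont_meas R G _ (@cont_AyB (evalw post s) (evalw pre s))). exact: HH.
    - by move=> y _; rewrite lee_fin.
    - rewrite lee_fin; apply: mulr_ge0 => //.
      by apply: prodr_ge0.
  rewrite (@iint_ext R G mu n _ _ key) IH //.
  - by congr EFin; rewrite !size_cat /= addnS exprS; ring.
  - by apply: mulr_ge0.
  - by move: ne; rewrite !all_cat /= => /and3P[-> _ ->].
  - rewrite flatten_cat; have := uniq_sides u; by [].
  - by rewrite flatten_cat.
have ltn' : all (fun k => k < n)%N (flatten ws).
  apply/allP => k /flattenP [w win kw].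
  move/allP: lt => /(_ k); rewrite ltnS leq_eqVlt.
  have -> : (k \in flatten ws) by apply/flattenP; exists w.
  move=> /(_ isT) /orP[/eqP ekn|//].
  by move/hasPn: nhw => /(_ w win); rewrite -ekn kw.
have key : forall s : seq G, size s = n ->
    \int[mu]_y (c * \prod_(w <- ws) f (evalw w (rcons s y)))%R%:E
    = (c * \prod_(w <- ws) f (evalw w s))%R%:E.
  move=> s hs.
  transitivity (\int[mu]_y (cst (c * \prod_(w <- ws) f (evalw w s))%R%:E) y).
    apply: eq_integral => y _ /=; congr EFin; congr (c * _)%R.
    apply: eq_big_seq => w win; rewrite evalw_rcons //.
    apply/allP => k kw; rewrite hs; move/allP: ltn'; apply.
    by apply/flattenP; exists w.
  rewrite integral_cst //. have P1 := @probability_setT _ _ R mu. rewrite [X in _ * X]P1. by rewrite mule1.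
by rewrite (@iint_ext R G mu n _ _ key) IH.
Qed.
End Claim.

Local Close Scope classical_set_scope.

Section Comb.
Variables (R : comNzRingType) (T : finType).

Lemma porbit_fix (t : {perm T}) a : t a = a -> porbit t a = [set a].
Proof.
move=> ta; apply/setP => y; rewrite inE; apply/porbitP/eqP => [[i ->]|->].
  by rewrite permX; elim: i => //= i ->.
by exists 0; rewrite expg0 perm1.
Qed.

Lemma card_porbits1 : #|porbits (1 : {perm T})| = #|T|.
Proof.
rewrite /porbits (eq_imset (g := fun x => [set x])); last first.
  by move=> x; apply: porbit_fix; rewrite perm1.
rewrite card_imset //; exact: set1_inj.
Qed.

Lemma perm_on_pred (A : {set T}) a j (t : {perm T}) :
  a \in A -> j \in A ->
  (perm_on A (tperm a j * t)%g && (((tperm a j * t)^-1)%g a == j)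
     && (tperm a j * (tperm a j * t) == t)%g) = perm_on (A :\ a) t.
Proof.
move=> aA jA.
have tauA : perm_on A (tperm a j).
  apply: fintype.subset_trans (tperm_on a j) _.
  by apply/fintype.subsetP => x; rewrite !inE => /orP[]/eqP->.
rewrite tpermKg eqxx andbT.
have -> : (((tperm a j * t)^-1)%g a == j) = (t a == a).
  rewrite invMg permM tpermV.
  apply/eqP/eqP => [H|H].
    have : (t^-1)%g a = a.
      by apply: (@perm_inj _ (tperm a j)); rewrite H tpermL.
    by move=> H2; rewrite -{1}H2 permKV.
  have -> : (t^-1)%g a = a by rewrite -{1}H permK.
  by rewrite tpermL.
apply/idP/idP.
  move=> /andP[pA ta].
  have pt : perm_on A t.
    by rewrite -(tpermKg a j t); apply: perm_onM.
  apply/fintype.subsetP => x; rewrite inE => tx; rewrite !inE.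
  rewrite (fintype.subsetP pt x) ?inE // andbT.
  by apply: contraNneq tx => ->; rewrite (eqP ta).
move=> pA'.
have pA : perm_on A t by apply: fintype.subset_trans pA' (subsetDl _ _).
rewrite perm_onM //=.
by rewrite (out_perm pA') // !inE eqxx.
Qed.

Lemma cyc_sum_gen (x : R) n : forall (A : {set T}), #|A| = n ->
  x ^+ #|A| * \sum_(s : {perm T} | perm_on A s) x ^+ #|porbits s| =
  x ^+ #|T| * \prod_(k < #|A|) (x + k%:R).
Proof.
elim: n => [|n IH] A cA.
  have A0 : A = finset.set0 by apply/eqP; rewrite -cards_eq0 cA.
  rewrite cA big_ord0 expr0 mul1r mulr1.
  rewrite (big_pred1 (1%g : {perm T})).
    by rewrite card_porbits1.
  move=> s /=; apply/idP/eqP => [ps|->]; last exact: perm_on1.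
  by apply: perm_on_id ps _; rewrite A0 cards0.
have [a aA] : exists a, a \in A.
  by apply/set0Pn; rewrite -cards_eq0 cA.
have cA' : #|A :\ a| = n by move: cA; rewrite (cardsD1 a A) aA add1n => -[].
rewrite (partition_big (fun s : {perm T} => ((s^-1)%g a)) (mem A)); last first.
  by move=> s ps; rewrite /= (perm_closed _ (perm_onV ps)).
have inner : forall j, j \in A ->
   \sum_(s : {perm T} | perm_on A s && ((s^-1)%g a == j)) x ^+ #|porbits s| =
   \sum_(t : {perm T} | perm_on (A :\ a) t) x ^+ #|porbits (tperm a j * t)%g|.
  move=> j jA.
  rewrite (reindex_onto (fun t => tperm a j * t)%g (fun s => tperm a j * s)%g); last first.
    by move=> s _; rewrite tpermKg.
  by apply: eq_bigl => t; rewrite perm_on_pred.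
rewrite (eq_bigr _ inner) exchange_big /= mulr_sumr.
have step : forall t : {perm T}, perm_on (A :\ a) t ->
   x ^+ #|A| * \sum_(j in A) x ^+ #|porbits (tperm a j * t)%g| =
   (x + n%:R) * (x ^+ n * x ^+ #|porbits t|).
  move=> t pt.
  have ta : t a = a by rewrite (out_perm pt) // !inE eqxx.
  rewrite (bigD1 a) //= tperm1 mul1g mulrDr.
  have -> : \sum_(j in A | j != a) x ^+ #|porbits (tperm a j * t)%g| =
            \sum_(j in A :\ a) x ^+ #|porbits t|.-1.
    apply: eq_big => [j|j]; first by rewrite !inE andbC.
    move=> /andP[jA ja].
    have := porbits_mul_tperm t a j.
    have -> : (a \notin porbit t j) = true.
      apply/negP; rewrite porbit_sym porbit_fix // inE => /eqP ja'.
      by move: ja; rewrite ja' eqxx.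
    rewrite /= eq_sym ja => H.
    have H2 : (#|porbits (tperm a j * t)%g| + 2 = #|porbits t| + 1)%N by exact: H.
    have -> : #|porbits t| = (#|porbits (tperm a j * t)%g|).+1 by lia.
    by [].
  rewrite sumr_const cA' cA.
  have cpos : (0 < #|porbits t|)%N.
    by rewrite card_gt0; apply/set0Pn; exists (porbit t a); apply: imset_f.
  rewrite -mulr_natl.
  move: cpos; case: #|porbits t| => // m _ /=.
  rewrite !exprS.
  ring.
rewrite (eq_bigr _ step) -mulr_sumr -mulr_sumr.
rewrite cA.
have := IH _ cA'; rewrite cA' => ->.
rewrite big_ord_recr /=.
ring.
Qed.

End Comb.

Lemma cyc_sum (R : idomainType) (x : R) n : x != 0 ->
  \sum_(s : 'S_n) x ^+ #|porbits s| = \prod_(k < n) (x + k%:R).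
Proof.
move=> x0.
have := @cyc_sum_gen R _ x _ [set: 'I_n] erefl.
rewrite cardsT card_ord.
rewrite (eq_bigl (fun _ => true)); last by move=> s; apply/fintype.subsetP => y; rewrite inE.
by move/(mulfI (expf_neq0 n x0)).
Qed.

Section Words.
Set Implicit Arguments.
Variables (n : nat) (s : 'S_n).

Definition wordC (C : {set 'I_n}) : seq nat :=
  if [pick i in C] is Some i then [seq val ((s ^+ k)%g i) | k <- iota 0 #|C|] else [::].
Definition wordsP := [seq wordC C | C <- enum (porbits s)].

Lemma size_words : size wordsP = #|porbits s|.
Proof. by rewrite size_map cardE. Qed.

Lemma wordC_spec C : C \in porbits s -> exists j, C = porbit s j /\
   wordC C = [seq val ((s ^+ k)%g j) | k <- iota 0 #|porbit s j|].
Proof.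
move=> /imsetP [x _ ->].
rewrite /wordC; case: pickP => [j jC|H]; last by have := H x; rewrite porbit_id.
have E : porbit s j == porbit s x by rewrite eq_porbit_mem.
exists j; rewrite (eqP E); split => //.
Qed.

Lemma words_ne : all (fun w => w != [::]) wordsP.
Proof.
apply/allP => w /mapP [C]; rewrite mem_enum => /wordC_spec [j [-> ->]] ->.
by rewrite -size_eq0 size_map size_iota card_porbit_neq0.
Qed.

Lemma words_lt : all (fun k => k < n)%N (flatten wordsP).
Proof.
apply/allP => k /flattenP [w /mapP [C _ ->]].
rewrite /wordC; case: pickP => [j _|//] /mapP [m _ ->]; exact: ltn_ord.
Qed.

Lemma uniq_flatten_map (T U : eqType) (h : T -> seq U) (l : seq T) :
  uniq l -> (forall x, x \in l -> uniq (h x)) ->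
  (forall x y u, x \in l -> y \in l -> u \in h x -> u \in h y -> x = y) ->
  uniq (flatten (map h l)).
Proof.
elim: l => [|x l IH] //= /andP[xl ul] hu hd.
rewrite cat_uniq hu ?inE ?eqxx //= IH //; last first.
- by move=> a b u al bl; apply: hd; rewrite inE ?al ?bl orbT.
- by move=> a al; apply: hu; rewrite inE al orbT.
rewrite andbT; apply/hasPn => u /flattenP [w /mapP [y yl ->]] uy; apply/negP => ux.
have exy : x = y by apply: (hd x y u) => //; rewrite inE ?eqxx ?yl ?orbT.
by move: xl; rewrite exy yl.
Qed.

Lemma traject_perm (j : 'I_n) m :
  [seq (s ^+ k)%g j | k <- iota 0 m] = traject s j m.
Proof.
apply: (@eq_from_nth _ j); first by rewrite size_map size_iota size_traject.
move=> i; rewrite size_map size_iota => im.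
by rewrite (nth_map 0%N) ?size_iota // nth_iota // nth_traject // permX.
Qed.

Lemma words_uniq : uniq (flatten wordsP).
Proof.
apply: uniq_flatten_map; first exact: enum_uniq.
  move=> C; rewrite mem_enum => /wordC_spec [j [_ ->]].
  have -> : [seq val ((s ^+ k)%g j) | k <- iota 0 #|porbit s j|] =
     map val [seq (s ^+ k)%g j | k <- iota 0 #|porbit s j|] by rewrite -map_comp.
  rewrite map_inj_uniq; last exact: val_inj.
  by rewrite traject_perm uniq_traject_porbit.
move=> C D u; rewrite !mem_enum => /wordC_spec [j [-> ->]] /wordC_spec [k [-> ->]].
move=> /mapP [a _ ->] /mapP [b _ /val_inj eab].
by rewrite -(porbit_perm s a j) eab porbit_perm.
Qed.

Lemma prod_words (R : realType) (G : ptopologicalType) (mul : G -> G -> G) (e : G)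
  (f : G -> R) (gs : seq G) :
  \prod_(C in porbits s) f (cycle_color mul e (fun i => nth point gs i) s C) =
  \prod_(w <- wordsP) f (@evalw G mul e w gs).
Proof.
rewrite /wordsP big_map big_enum /=.
apply: eq_bigr => C _; congr f.
rewrite /cycle_color /wordC; case: pickP => //= i _.
rewrite /evalw; elim: (iota 0 #|C|) e => [|k l IH] acc //=.
Qed.

End Words.

Local Close Scope ring_scope.
Local Open Scope classical_set_scope.
Local Open Scope ring_scope.


Lemma zz (R : realType) (w : R[i]) : w * w^* = ((complex.Re (w * w^*))%:C)%C.
Proof.
case: w => a b /=.
change (Complex (a * a - b * - b) (a * - b + b * a) = Complex (a * a - b * - b) 0).
by congr Complex; ring.
Qed.

Lemma dens_eq (R : realType) (G : ptopologicalType) (mul : G -> G -> G) (e : G)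
  (z : G -> R[i]) (I : R) n (g : 'I_n -> G) (s : 'S_n) :
  ewens_density mul e z I g s =
  ((n`!%:R * \prod_(C in porbits s) complex.Re (z (cycle_color mul e g s C) * (z (cycle_color mul e g s C))^*))
    / \prod_(k < n) (I + k%:R))%:C%C.
Proof.
rewrite /ewens_density fmorph_div rmorphM rmorph_nat rmorph_prod.
congr (_ * _ / _); last by rewrite rmorph_prod.
rewrite rmorph_prod; apply: eq_bigr => C _; exact: zz.
Qed.

Theorem mainTheorem2 (R : realType) (G : ptopologicalType)
  (mul : G -> G -> G) (inv : G -> G) (e : G)
  (* group axioms *)
  (mulA : forall x y w, mul x (mul y w) = mul (mul x y) w)
  (mul1g : forall x, mul e x = x)
  (mulVg : forall x, mul (inv x) x = e)
  (* compact (Hausdorff) topological group *)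
  (mul_cont : continuous (fun p : G * G => mul p.1 p.2))
  (inv_cont : continuous inv)
  (G_hausdorff : hausdorff_space G)
  (G_compact : compact [set: G])
  (* normalized Haar measure on the Borel sets of G *)
  (mu : probability (Borel G) R)
  (mu_left : forall (g : G) (A : set (Borel G)), measurable A ->
      mu ((fun x : Borel G => (mul g x : Borel G)) @^-1` A) = mu A)
  (mu_right : forall (g : G) (A : set (Borel G)), measurable A ->
      mu ((fun x : Borel G => (mul x g : Borel G)) @^-1` A) = mu A)
  (* z : G -> C \ {0}, continuous and central *)
  (z : G -> R[i])
  (z_neq0 : forall g, z g != 0)
  (z_cont_Re : continuous (fun g : G => (complex.Re (z g) : R)))
  (z_cont_Im : continuous (fun g : G => (complex.Im (z g) : R)))
  (z_central : forall g h, z (mul h (mul g (inv h))) = z g)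
  (n : nat) :
  let I := Rintegral mu [set: Borel G] (fun g => complex.Re (z g * (z g)^*)) in
  (forall (g : 'I_n -> G) (s : 'S_n),
      complex.Im (ewens_density mul e z I g s) = 0) /\
  int_SnG mu (fun (g : 'I_n -> G) (s : 'S_n) => (complex.Re (ewens_density mul e z I g s))%:E) = 1%E.
Proof.
move=> I.
set fz := fun g => complex.Re (z g * (z g)^*) in I *.
have fzE : forall g, fz g = complex.Re (z g) * complex.Re (z g) + complex.Im (z g) * complex.Im (z g).
  move=> g; rewrite /fz; case: (z g) => a b /=.
  change (a * a - b * - b = a * a + b * b); ring.
have fz0 : forall g, 0 <= fz g.
  by move=> g; rewrite fzE addr_ge0 // -expr2 sqr_ge0.
have fzpos : forall g, 0 < fz g.
  move=> g; rewrite lt0r fz0 andbT fzE.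
  have := z_neq0 g; case: (z g) => a b /= H.
  rewrite paddr_eq0 -?expr2 ?sqr_ge0 // !sqrf_eq0.
  apply: contra H => /andP[/eqP -> /eqP ->]; by [].
have fzc : continuous fz.
  have -> : fz = (fun g => complex.Re (z g) * complex.Re (z g) + complex.Im (z g) * complex.Im (z g)).
    by apply: funext => g; rewrite fzE.
  by move=> x; apply: cvgD; apply: cvgM; [apply: z_cont_Re|apply: z_cont_Re|apply: z_cont_Im|apply: z_cont_Im].
have [M hM] := @cont_ub R G fz fzc G_compact.
have [M' hM'] : exists M', forall g, (fz g)^-1 <= M'.
  apply: (@cont_ub R G) => //; move=> x; apply: cvgV; first by rewrite gt_eqF.
  exact: fzc.
have mfz : measurable_fun setT (fun x : Borel G => (fz x)%:E).
  by apply/measurable_EFinP; exact: (@cont_meas R G fz fzc).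
have P1 := @probability_setT _ _ R mu.
have ile : (\int[mu]_x (fz x)%:E <= M%:E)%E.
  apply: (le_trans (@ge0_le_integral _ _ R mu setT measurableT _ (cst M%:E) _ mfz _ _)).
  - by move=> x _; rewrite lee_fin.
  - exact: measurable_cst.
  - by move=> x _; rewrite lee_fin hM.
  by rewrite integral_cst // [X in (_ * X)%E]P1 mule1.
have hint : (\int[mu]_x (fz x)%:E = I%:E)%E.
  rewrite /I /Rintegral fineK // ge0_fin_numE.
    exact: le_lt_trans ile (ltry M).
  by apply: integral_ge0 => x _; rewrite lee_fin.
have M'pos : 0 < M'.
  by apply: lt_le_trans (hM' point); rewrite invr_gt0.
have lbound : forall g, M'^-1 <= fz g.
  move=> g; rewrite -[fz g]invrK lef_pV2 ?posrE ?invr_gt0 //.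
have Ipos : 0 < I.
  have : ((M'^-1)%:E <= I%:E)%E.
    rewrite -hint.
    apply: (le_trans _ (@ge0_le_integral _ _ R mu setT measurableT (cst (M'^-1)%:E) _ _ _ mfz _)).
    - by rewrite integral_cst // [X in (_ * X)%E]P1 mule1.
    - by move=> x _; rewrite lee_fin invr_ge0 ltW.
    - exact: measurable_cst.
    - by move=> x _; rewrite lee_fin lbound.
  by rewrite lee_fin => H; apply: lt_le_trans H; rewrite invr_gt0.
have hinv : forall a b, (\int[mu]_x (fz (mul a (mul x b)))%:E = I%:E)%E.
  move=> a b; rewrite -hint.
  have cl : continuous (fun y => fz (mul a y)).
    move=> x; apply: (@continuous_comp _ _ _ (mul a) fz); last exact: fzc.
    exact: (@cont_mul_l G mul mul_cont a).
  rewrite (@pushinv R G mu (mul^~ b) (@cont_mul_r G mul mul_cont b) (mu_right b)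
     (fun y => fz (mul a y)) cl (fun _ => fz0 _)).
  exact: (@pushinv R G mu (mul a) (@cont_mul_l G mul mul_cont a) (mu_left a) fz fzc fz0).
split.
  by move=> g s; rewrite dens_eq.
rewrite /int_SnG.
set D := \prod_(k < n) (I + k%:R).
have Dpos : 0 < D.
  apply: prodr_gt0 => k _; apply: (lt_le_trans Ipos); rewrite lerDl; exact: ler0n.
have step : forall s : 'S_n,
  iint mu n (fun gs => (complex.Re (ewens_density mul e z I (fun i => nth point gs i) s))%:E) =
  ((n`!%:R / D) * I ^+ #|porbits s|)%:E.
  move=> s.
  have -> : (fun gs => (complex.Re (ewens_density mul e z I (fun i => nth point gs i) s))%:E) =
      (fun gs => ((n`!%:R / D) * \prod_(w <- wordsP s) fz (@evalw G mul e w gs))%:E).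
    apply: funext => gs; rewrite dens_eq /= -prod_words -/D; congr EFin.
    by rewrite mulrAC.
  rewrite (claim mul e mulA mul1g mul_cont mu fzc fz0 (ltW Ipos) hinv n (wordsP s)) ?size_words //.
  - by rewrite divr_ge0 // ltW.
  - exact: words_ne.
  - exact: words_uniq.
  - exact: words_lt.
rewrite (eq_bigr _ (fun s _ => step s)) sumEFin -EFinM; congr EFin.
rewrite -mulr_sumr cyc_sum ?gt_eqF //.
rewrite -/D.
have nf : (n`!%:R : R) != 0 by rewrite pnatr_eq0 -lt0n fact_gt0.
by field; rewrite nf gt_eqF.
Qed.
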